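(* Let $\mathbf{X}=(X_1,X_2)$ and $\mathbf{Y}=(Y_1,Y_2)$ be jointly distributed random variables (the ''past'' and ''future'' states of a bivariate Markovian process). Let $\mathcal{A}$ and the product lattice $(\mathcal{A}\times\mathcal{A},\preceq)$ be as described in the context, and fix a single-target redundancy function $\texttt{Red}$. Suppose $I_\cap$ and $I'_\cap$ are two double-redundancy functions on $\mathcal{A}\times\mathcal{A}$ that both satisfy Axiom 1 (compatibility, with respect to this same $\texttt{Red}$) and Axiom 2 (partial ordering), and let $I_\partial$, $I'_\partial$ be their respective atoms defined via Möbius inversion. If $I_\partial^{\{\{1\},\{2\}\}\to\{\{1\},\{2\}\}} = I'^{\{\{1\},\{2\}\}\to\{\{1\},\{2\}\}}_\partial$, then $I_\partial^{\boldsymbol\alpha\to\boldsymbol\beta}=I'^{\boldsymbol\alpha\to\boldsymbol\beta}_\partial$ for all 16 nodes $\boldsymbol\alpha\to\boldsymbol\beta\in\mathcal{A}\times\mathcal{A}$. That is, Axioms 1 and 2 provide unique values for the 16 atoms once one specifies (i) a single-target redundancy function $\texttt{Red}$ and (ii) the value of the atom $I_\partial^{\{\{1\},\{2\}\}\to\{\{1\},\{2\}\}}$.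
   Context: $\mathcal{A}$ is the set of antichains of nonempty subsets of $\{1,2\}$: $\mathcal{A}=\{\{\{1\}\},\{\{2\}\},\{\{1,2\}\},\{\{1\},\{2\}\}\}$. For $\boldsymbol\alpha,\boldsymbol\beta\in\mathcal{A}$, $\boldsymbol\alpha\preceq\boldsymbol\beta$ iff for every $b\in\boldsymbol\beta$ there is $a\in\boldsymbol\alpha$ with $a\subseteq b$. Elements of $\mathcal{A}\times\mathcal{A}$ are written $\boldsymbol\alpha\to\boldsymbol\beta$, ordered by $\boldsymbol\alpha\to\boldsymbol\beta\preceq\boldsymbol\alpha'\to\boldsymbol\beta'$ iff $\boldsymbol\alpha\preceq\boldsymbol\alpha'$ and $\boldsymbol\beta\preceq\boldsymbol\beta'$ (16 nodes). For a subset $a=\{i_1,\dots,i_k\}\subseteq\{1,2\}$ write $\mathbf{X}^a=(X_{i_1},\dots,X_{i_k})$, similarly $\mathbf{Y}^a$. A single-target redundancy function $\texttt{Red}(Z_1,\dots,Z_J;T)$ assigns a real number to any finite collection of source random vectors $Z_1,\dots,Z_J$ and a target random vector $T$ (the partial-information-decomposition redundancy). A double-redundancy function assigns a real number $I_\cap^{\boldsymbol\alpha\to\boldsymbol\beta}$ to each node. Axiom 1 (compatibility): for $\boldsymbol\alpha=\{\alpha_1,\dots,\alpha_J\}$, $\boldsymbol\beta=\{\beta_1,\dots,\beta_K\}$: if $J=K=1$ then $I_\cap^{\boldsymbol\alpha\to\boldsymbol\beta}=I(\mathbf{X}^{\alpha_1};\mathbf{Y}^{\beta_1})$ (Shannon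 mutual information); if $K=1$ then $I_\cap^{\boldsymbol\alpha\to\boldsymbol\beta}=\texttt{Red}(\mathbf{X}^{\alpha_1},\dots,\mathbf{X}^{\alpha_J};\mathbf{Y}^{\beta_1})$; if $J=1$ then $I_\cap^{\boldsymbol\alpha\to\boldsymbol\beta}=\texttt{Red}(\mathbf{Y}^{\beta_1},\dots,\mathbf{Y}^{\beta_K};\mathbf{X}^{\alpha_1})$. Axiom 2 (partial ordering): if $\boldsymbol\alpha\to\boldsymbol\beta\preceq\boldsymbol\alpha'\to\boldsymbol\beta'$ then $I_\cap^{\boldsymbol\alpha\to\boldsymbol\beta}\le I_\cap^{\boldsymbol\alpha'\to\boldsymbol\beta'}$. The atoms $I_\partial^{\boldsymbol\alpha\to\boldsymbol\beta}$ are the unique numbers satisfying $I_\cap^{\boldsymbol\alpha\to\boldsymbol\beta}=\sum_{\boldsymbol\alpha'\to\boldsymbol\beta'\preceq\boldsymbol\alpha\to\boldsymbol\beta}I_\partial^{\boldsymbol\alpha'\to\boldsymbol\beta'}$ for all nodes, equivalently $I_\partial^{\boldsymbol\alpha\to\boldsymbol\beta}=I_\cap^{\boldsymbol\alpha\to\boldsymbol\beta}-\sum_{\boldsymbol\alpha'\to\boldsymbol\beta'\prec\boldsymbol\alpha\to\boldsymbol\beta}I_\partial^{\boldsymbol\alpha'\to\boldsymbol\beta'}$. *)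

(* Defs.v *)
From mathcomp Require Import all_boot all_order all_algebra.
From mathcomp Require Import reals exp.
Set Implicit Arguments. Unset Strict Implicit. Unset Printing Implicit Defensive.
Import Order.TTheory GRing.Theory Num.Theory.
Local Open Scope ring_scope.

(* The index set {1,2} is modelled as 'I_2 : index 1 ~ i1, index 2 ~ i2. *)
Definition i1 : 'I_2 := ord0.
Definition i2 : 'I_2 := ord_max.

(* Antichains of nonempty subsets of {1,2}; the set A consists of the
   nonempty ones (exactly the four listed in the paper). *)
Definition isA (al : {set {set 'I_2}}) : bool :=
  [&& al != set0, set0 \notin al &
      [forall a in al, forall b in al, (a \subset b) ==> (a == b)]].

Definition precA (al be : {set {set 'I_2}}) : bool :=
  [forall b in be, [exists a in al, a \subset b]].

Definition precN (n n' : {set {set 'I_2}} * {set {set 'I_2}}) : bool :=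
  precA n.1 n'.1 && precA n.2 n'.2.

Definition isNode (n : {set {set 'I_2}} * {set {set 'I_2}}) : bool :=
  isA n.1 && isA n.2.

Definition bot2 : {set {set 'I_2}} := [set [set i1]; [set i2]].

(* Discrete random variables on a finite sample space Omega with pmf P.
   A random vector is a finite list of random variables (with values in a
   common eqType V); its value at w is the list of the values. *)
Definition rvec (Omega : finType) (V : eqType) := seq (Omega -> V).

Definition rval (Omega : finType) (V : eqType) (Z : rvec Omega V) (w : Omega)
  : seq V := [seq f w | f <- Z].

Definition subvec (Omega : finType) (V : eqType) (X : 'I_2 -> Omega -> V)
  (a : {set 'I_2}) : rvec Omega V := [seq X i | i <- enum a].

Definition prob (R : realType) (Omega : finType) (P : Omega -> R)
  (T : eqType) (A : Omega -> T) (x : T) : R :=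
  \sum_(w | A w == x) P w.

Definition mutinfo (R : realType) (Omega : finType) (P : Omega -> R)
  (V : eqType) (A B : rvec Omega V) : R :=
  \sum_(w : Omega)
     P w * ln (prob P (fun u => (rval A u, rval B u)) (rval A w, rval B w)
               / (prob P (rval A) (rval A w) * prob P (rval B) (rval B w))).

Definition compatible (R : realType) (Omega : finType) (P : Omega -> R)
  (V : eqType) (X Y : 'I_2 -> Omega -> V)
  (Red : seq (rvec Omega V) -> rvec Omega V -> R)
  (Icap : {set {set 'I_2}} -> {set {set 'I_2}} -> R) : Prop :=
  [/\ (forall a b, isA [set a] -> isA [set b] ->
         Icap [set a] [set b] = mutinfo P (subvec X a) (subvec Y b)),
      (forall al b, isA al -> isA [set b] ->
         Icap al [set b] = Red [seq subvec X a | a <- enum al] (subvec Y b)) &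
      (forall a be, isA [set a] -> isA be ->
         Icap [set a] be = Red [seq subvec Y b | b <- enum be] (subvec X a))].

Definition monotone (R : realType)
  (Icap : {set {set 'I_2}} -> {set {set 'I_2}} -> R) : Prop :=
  forall n n', isNode n -> isNode n' -> precN n n' ->
    Icap n.1 n.2 <= Icap n'.1 n'.2.

Definition atoms_of (R : realType)
  (Icap Ipart : {set {set 'I_2}} -> {set {set 'I_2}} -> R) : Prop :=
  forall n, isNode n ->
    Icap n.1 n.2 = \sum_(m | isNode m && precN m n) Ipart m.1 m.2.

(* Main.v *)
Require Import Defs.
From mathcomp Require Import all_boot all_order all_algebra.
From mathcomp Require Import reals exp.
Import Order.TTheory GRing.Theory Num.Theory.
Set Implicit Arguments. Unset Strict Implicit.
Local Open Scope ring_scope.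

Lemma ord2 (i : 'I_2) : i = i1 \/ i = i2.
Proof. case: i => [[|[|m]] Hm]; [left|right|by []]; exact: val_inj. Qed.

Lemma set2_cases (s : {set 'I_2}) :
  s = set0 \/ s = [set i1] \/ s = [set i2] \/ s = setT.
Proof.
case h1: (i1 \in s); case h2: (i2 \in s).
- by right; right; right; apply/setP => i; case: (ord2 i) => ->; rewrite !inE ?h1 ?h2.
- by right; left; apply/setP => i; case: (ord2 i) => ->; rewrite !inE ?h1 ?h2.
- by right; right; left; apply/setP => i; case: (ord2 i) => ->; rewrite !inE ?h1 ?h2.
- by left; apply/setP => i; case: (ord2 i) => ->; rewrite !inE ?h1 ?h2.
Qed.

Lemma ne1T : [set i1] != setT :> {set 'I_2}.
Proof. by apply/eqP => /setP /(_ i2); rewrite !inE. Qed.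
Lemma ne2T : [set i2] != setT :> {set 'I_2}.
Proof. by apply/eqP => /setP /(_ i1); rewrite !inE. Qed.
Lemma ne12 : [set i1] != [set i2] :> {set 'I_2}.
Proof. by apply/eqP => /setP /(_ i1); rewrite !inE. Qed.

Lemma shapeA al : isA al -> al = bot2 \/ exists a, al = [set a].
Proof.
case/and3P => ne0 n0 /forallP ac.
have acP a b : a \in al -> b \in al -> a \subset b -> a = b.
  by move=> Ha Hb Hs; move: (ac a) => /implyP /(_ Ha) /forallP /(_ b) /implyP /(_ Hb) /implyP /(_ Hs) /eqP.
case HT: (setT \in al).
  right; exists setT; apply/setP => x; rewrite inE; apply/idP/idP => [Hx|/eqP -> //].
  by apply/eqP; apply: acP => //; apply: subsetT.
have mem x : x \in al -> x = [set i1] \/ x = [set i2].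
  move=> Hx; case: (set2_cases x) => [E|[E|[E|E]]]; subst x => //; first by rewrite Hx in n0.
  - by left.
  - by right.
  - by rewrite Hx in HT.
case H1: ([set i1] \in al); case H2: ([set i2] \in al).
- left; apply/setP => x; rewrite !inE; apply/idP/idP => [/mem [->|->]|/orP [/eqP->|/eqP->]] //;
  by rewrite eqxx ?orbT.
- right; exists [set i1]; apply/setP => x; rewrite inE; apply/idP/idP => [Hx|/eqP -> //].
  by case: (mem x Hx) => E; subst x; rewrite ?eqxx //; rewrite H2 in Hx.
- right; exists [set i2]; apply/setP => x; rewrite inE; apply/idP/idP => [Hx|/eqP -> //].
  by case: (mem x Hx) => E; subst x; rewrite ?eqxx //; rewrite H1 in Hx.
- exfalso; case/set0Pn: ne0 => x Hx; by case: (mem x Hx) => E; subst x; rewrite ?H1 ?H2 in Hx.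
Qed.

Lemma precA_refl al : precA al al.
Proof. by apply/forallP => b; apply/implyP => Hb; apply/existsP; exists b; rewrite Hb subxx. Qed.

Lemma precA_trans al be ga : precA al be -> precA be ga -> precA al ga.
Proof.
move=> /forallP H1 /forallP H2; apply/forallP => c; apply/implyP => Hc.
move: (H2 c) => /implyP /(_ Hc) /existsP [b /andP [Hb Hbc]].
move: (H1 b) => /implyP /(_ Hb) /existsP [a /andP [Ha Hab]].
by apply/existsP; exists a; rewrite Ha (subset_trans Hab Hbc).
Qed.

Lemma precA_sub al be : isA be -> precA al be -> precA be al -> {subset be <= al}.
Proof.
case/and3P => _ _ /forallP ac /forallP H1 /forallP H2 b Hb.
move: (H1 b) => /implyP /(_ Hb) /existsP [a /andP [Ha Hab]].
move: (H2 a) => /implyP /(_ Ha) /existsP [b' /andP [Hb' Hba]].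
have Eb : b' = b.
  by move: (ac b') => /implyP /(_ Hb') /forallP /(_ b) /implyP /(_ Hb) /implyP /(_ (subset_trans Hba Hab)) /eqP.
subst b'.
have -> : b = a by apply/eqP; rewrite eqEsubset Hba Hab.
exact: Ha.
Qed.

Lemma precA_anti al be : isA al -> isA be -> precA al be -> precA be al -> al = be.
Proof.
move=> Ha Hb H1 H2; apply/setP => x; apply/idP/idP.
- by move=> Hx; apply: (precA_sub Ha H2 H1).
- by move=> Hx; apply: (precA_sub Hb H1 H2).
Qed.

Unset Implicit Arguments.
Theorem proposition1 (R : realType) (Omega : finType) (P : Omega -> R)
  (V : eqType) (X Y : 'I_2 -> Omega -> V)
  (Red : seq (rvec Omega V) -> rvec Omega V -> R)
  (Icap Icap' Ipart Ipart' : {set {set 'I_2}} -> {set {set 'I_2}} -> R) :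
  (forall w, 0 <= P w) -> \sum_(w : Omega) P w = 1 ->
  compatible P X Y Red Icap -> monotone Icap ->
  compatible P X Y Red Icap' -> monotone Icap' ->
  atoms_of Icap Ipart -> atoms_of Icap' Ipart' ->
  Ipart bot2 bot2 = Ipart' bot2 bot2 ->
  forall al be, isA al -> isA be -> Ipart al be = Ipart' al be.
Proof.
move=> _ _ [_ C2 C3] _ [_ C2' C3'] _ A A' Hbot.
have Heq al be : isA al -> isA be -> (al, be) != (bot2, bot2) -> Icap al be = Icap' al be.
  move=> Ha Hb Hne; case: (shapeA Ha) => [Ea|[a Ea]]; last first.
    by subst al; rewrite C3 // C3'.
  case: (shapeA Hb) => [Eb|[b Eb]]; last by subst be; rewrite C2 // C2'.
  by subst; rewrite eqxx in Hne.
pose D (m : {set {set 'I_2}} * {set {set 'I_2}}) := Ipart m.1 m.2 - Ipart' m.1 m.2.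
have HS n : isNode n -> n != (bot2, bot2) -> \sum_(m | isNode m && precN m n) D m = 0.
  move=> Hn Hne; rewrite sumrB -A // -A' //; case: n Hn Hne => a b /andP [Ha Hb] Hne.
  by rewrite /= Heq ?subrr.
pose S n := [set m | isNode m && precN m n].
have key n : isNode n -> D n = 0.
  move: {2}#|S n|.+1 (ltnSn #|S n|) => k; elim: k n => [//|k IH] n Hk Hn.
  case: (eqVneq n (bot2, bot2)) => [->|Hne]; first by rewrite /D /= Hbot subrr.
  have Hnn : isNode n && precN n n by rewrite Hn /precN !precA_refl.
  move: (HS n Hn Hne); rewrite (bigD1 n) //.
  have -> : \sum_(m | (isNode m && precN m n) && (m != n)) D m = 0; last first.
    by move=> H; exact: (etrans (esym (addr0 (D n))) H).
  apply: big1 => m /andP [/andP [Hm Hmn] mne].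
  apply: IH (Hm); rewrite -ltnS; apply: leq_trans Hk; rewrite ltnS; apply: proper_card.
  apply/properP; split.
    apply/subsetP => x; rewrite !inE => /andP [Hx /andP [Hx1 Hx2]].
    case/andP: Hmn => Hm1 Hm2.
    by rewrite Hx /precN (precA_trans Hx1 Hm1) (precA_trans Hx2 Hm2).
  exists n; first by rewrite inE.
  rewrite inE Hn /=; apply/negP => /andP [Hn1 Hn2].
  case/andP: Hmn => Hm1 Hm2; case/andP: Hm => Hm1' Hm2'; case/andP: Hn => Hn1' Hn2'.
  move/eqP: mne; apply; case: m Hm1 Hm2 Hm1' Hm2' Hn1 Hn2 => m1 m2; case: n {Hne Hnn} Hn1' Hn2' => n1 n2 /= ? ? ? ? ? ? ? ?.
  by congr pair; apply: precA_anti.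
move=> al be Ha Hb; apply/eqP; rewrite -subr_eq0; apply/eqP.
exact: (key (al, be)) (introT andP (conj Ha Hb)).
Qed.
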